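(* Fix subgroups $s\neq s'$, a cohort $g\in\{1,\dots,\mathcal T\}$ and $t$ with $g\le t\le\mathcal T$, and assume all potential outcomes are integrable and $P(G=g,S=\sigma)>0$ for $\sigma\in\{s,s'\}$. Suppose (No subgroup selection) $$\mathbb E[Y_t(g;s')-Y_t(\infty;s')\mid G=g,S=s]=\mathbb E[Y_t(g;s')-Y_t(\infty;s')\mid G=g,S=s'].$$ Then $CDATT_{s-s'}(g,t)=DATT_{s-s'}(g,t)$. Consequently, if in addition the hypotheses of part (a) (resp. (b)) below hold, then $CDATT_{s-s'}(g,t)$ equals $$\mathbb E[Y_t-Y_{g-1}\mid G=g,S=s]-\mathbb E[Y_t-Y_{g-1}\mid G=g,S=s']-\Big(\mathbb E[Y_t-Y_{g-1}\mid C,S=s]-\mathbb E[Y_t-Y_{g-1}\mid C,S=s']\Big),$$ where $C$ is the event $\{G>t\}$ (resp. $\{G=\infty\}$), assumed to satisfy $P(C,S=\sigma)>0$ for $\sigma\in\{s,s'\}$. The hypotheses are: (i) for every finite cohort $g'$, every $\tau<g'$ and every $\sigma$ with $P(G=g',S=\sigma)>0$, $\mathbb E[Y_\tau(g')\mid G=g',S=\sigma]=\mathbb E[Y_\tau(\infty)\mid G=g',S=\sigma]$; and (ii) $\mathbb E[Y_t(\infty)-Y_{g-1}(\infty)\mid G=g,S=s]-\mathbb E[Y_t(\infty)-Y_{g-1}(\infty)\mid G=g,S=s']=\mathbb E[Y_t(\infty)-Y_{g-1}(\infty)\mid C,S=s]-\mathbb E[Y_t(\infty)-Y_{g-1}(\infty)\mid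 C,S=s']$.
   Context: Time periods are $t=0,1,\dots,\mathcal T$; $\mathcal S$ is a finite set of subgroups. A unit is described by a random element consisting of: $G\in\{1,\dots,\mathcal T\}\cup\{\infty\}$, the first period in which the unit is treated ($G=\infty$ means never treated; treatment is irreversible); a subgroup $S\in\mathcal S$; covariates $X$; and real potential outcomes $Y_t(g';\sigma)$ for every period $t$, every possible cohort $g'$ (including $\infty$) and every $\sigma\in\mathcal S$, interpreted as the outcome at $t$ had the unit first been treated at $g'$ and belonged to subgroup $\sigma$. Write $Y_t(g'):=Y_t(g';S)$ and the observed outcome $Y_t:=Y_t(G;S)$. Units are i.i.d. (panel data). Define $$DATT_{s-s'}(g,t):=\mathbb E[Y_t(g)-Y_t(\infty)\mid G=g,S=s]-\mathbb E[Y_t(g)-Y_t(\infty)\mid G=g,S=s'],$$ $$CDATT_{s-s'}(g,t):=\mathbb E[Y_t(g;s)-Y_t(\infty;s)\mid G=g,S=s]-\mathbb E[Y_t(g;s')-Y_t(\infty;s')\mid G=g,S=s].$$ *)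

(* Defs.v *)
From HB Require Import structures.
From mathcomp Require Import all_boot all_order all_algebra.
From mathcomp Require Import all_classical all_reals all_analysis.
Set Implicit Arguments. Unset Strict Implicit. Unset Printing Implicit Defensive.
Import Order.TTheory GRing.Theory Num.Theory.
Local Open Scope classical_set_scope.
Local Open Scope ring_scope.

(* Cohorts: [Some k] = first treated at period k, [None] = never treated (infinity). *)
Definition cohort := option nat.

Definition valid_cohort (T : nat) (c : cohort) : Prop :=
  match c with None => True | Some k => (1 <= k <= T)%N end.

Definition cohort_gt (c : cohort) (t : nat) : bool :=
  match c with None => true | Some k => (t < k)%N end.

Section Defs.
Context {d : measure_display} {Omega : measurableType d} {R : realType}.

Definition condE (P : probability Omega R) (A : set Omega) (X : Omega -> R) : R :=
  Rintegral P A X / fine (P A).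

Context {Sub : finType}.

Definition evGS (G : Omega -> cohort) (S : Omega -> Sub) (c : cohort) (sg : Sub)
  : set Omega := [set w | G w = c /\ S w = sg].

Definition evCS (C : set Omega) (S : Omega -> Sub) (sg : Sub) : set Omega :=
  C `&` [set w | S w = sg].

(* Y t c sg w = Y_t(c; sg)(w). *)
Definition DATT (P : probability Omega R) (G : Omega -> cohort) (S : Omega -> Sub)
  (Y : nat -> cohort -> Sub -> Omega -> R) (s s' : Sub) (g t : nat) : R :=
  condE P (evGS G S (Some g) s) (fun w => Y t (Some g) (S w) w - Y t None (S w) w)
  - condE P (evGS G S (Some g) s') (fun w => Y t (Some g) (S w) w - Y t None (S w) w).

Definition CDATT (P : probability Omega R) (G : Omega -> cohort) (S : Omega -> Sub)
  (Y : nat -> cohort -> Sub -> Omega -> R) (s s' : Sub) (g t : nat) : R :=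
  condE P (evGS G S (Some g) s) (fun w => Y t (Some g) s w - Y t None s w)
  - condE P (evGS G S (Some g) s) (fun w => Y t (Some g) s' w - Y t None s' w).

Definition Yobs (G : Omega -> cohort) (S : Omega -> Sub)
  (Y : nat -> cohort -> Sub -> Omega -> R) (t : nat) : Omega -> R :=
  fun w => Y t (G w) (S w) w.

Definition DDD (P : probability Omega R) (G : Omega -> cohort) (S : Omega -> Sub)
  (Y : nat -> cohort -> Sub -> Omega -> R) (C : set Omega) (s s' : Sub) (g t : nat) : R :=
  let D := fun w => Yobs G S Y t w - Yobs G S Y g.-1 w in
  condE P (evGS G S (Some g) s) D - condE P (evGS G S (Some g) s') D
  - (condE P (evCS C S s) D - condE P (evCS C S s') D).

Definition no_anticipation (P : probability Omega R) (T : nat) (G : Omega -> cohort)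
  (S : Omega -> Sub) (Y : nat -> cohort -> Sub -> Omega -> R) : Prop :=
  forall g' : nat, (1 <= g' <= T)%N -> forall tau : nat, (tau < g')%N ->
  forall sg : Sub, (0 < P (evGS G S (Some g') sg))%E ->
    condE P (evGS G S (Some g') sg) (fun w => Y tau (Some g') (S w) w)
    = condE P (evGS G S (Some g') sg) (fun w => Y tau None (S w) w).

Definition parallel_trends (P : probability Omega R) (G : Omega -> cohort)
  (S : Omega -> Sub) (Y : nat -> cohort -> Sub -> Omega -> R) (C : set Omega)
  (s s' : Sub) (g t : nat) : Prop :=
  let D := fun w => Y t None (S w) w - Y g.-1 None (S w) w in
  condE P (evGS G S (Some g) s) D - condE P (evGS G S (Some g) s') D
  = condE P (evCS C S s) D - condE P (evCS C S s') D.

End Defs.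

(* Main.v *)
Require Import Defs.
From HB Require Import structures.
From mathcomp Require Import all_boot all_order all_algebra.
From mathcomp Require Import all_classical all_reals all_analysis.
From mathcomp Require Import measurable_realfun ring.
Import Order.TTheory GRing.Theory Num.Theory.
Local Open Scope classical_set_scope.
Local Open Scope ring_scope.

Definition cdec (k : nat) : cohort := if k is k'.+1 then Some k' else None.
Definition cenc (c : cohort) : nat := if c is Some k then k.+1 else 0%N.
Lemma cdecK c : cdec (cenc c) = c. Proof. by case: c. Qed.

Lemma preG_meas d (Omega : measurableType d) (G : Omega -> cohort)
  (HGmeas : forall c : cohort, measurable (G @^-1` [set c])) (Q : set cohort) :
  measurable (G @^-1` Q).
Proof.
have -> : G @^-1` Q = \bigcup_k (G @^-1` (Q `&` [set cdec k])).
  apply/seteqP; split => w /=.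
    by move=> Qw; exists (cenc (G w)) => //=; rewrite cdecK.
  by move=> [k _ [Qw _]].
apply: bigcupT_measurable => k.
have [Qk|nQk] := pselect (Q (cdec k)).
  have -> : Q `&` [set cdec k] = [set cdec k].
    by apply/seteqP; split => x /=; [case|move=> ->].
  exact: HGmeas.
have -> : Q `&` [set cdec k] = set0.
  by apply/seteqP; split => x //= [Qx xk]; apply: nQk; rewrite -xk.
by rewrite preimage_set0.
Qed.

Lemma pieces_meas d (Omega : measurableType d) (G : Omega -> cohort)
  (HGmeas : forall c : cohort, measurable (G @^-1` [set c])) (T2 : Type) (d2 : measure_display) (T3 : measurableType d2) (f : Omega -> T3)
  (L : seq cohort) : forall A, measurable A -> (forall w, A w -> G w \in L) ->
  (forall c, measurable_fun (A `&` G @^-1` [set c]) f) -> measurable_fun A f.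
Proof.
elim: L => [|c L IH] A mA cov mf.
  have -> : A = set0 by apply/seteqP; split => w //= /cov.
  exact: measurable_fun_set0.
have mGc := HGmeas c.
have -> : A = (A `&` G @^-1` [set c]) `|` (A `&` ~` (G @^-1` [set c])).
  by rewrite -setIUr setUCr setIT.
apply/measurable_funU; [exact: measurableI|apply: measurableI=>//; exact: measurableC|].
split; first exact: mf.
apply: IH.
- apply: measurableI=>//; exact: measurableC.
- move=> w [Aw /= nc]; move: (cov w Aw); rewrite inE => /orP[/eqP//|//].
- move=> c'; apply: measurable_funS (mf c') => //.
    by apply: measurableI => //; exact: HGmeas.
  by move=> w [[Aw _] ?].
Qed.

Local Open Scope ereal_scope.

Lemma pieces_int d (Omega : measurableType d) (R : realType) (mu : {measure set Omega -> \bar R})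
  (G : Omega -> cohort)
  (HGmeas : forall c : cohort, measurable (G @^-1` [set c])) (f h : Omega -> \bar R)
  (L : seq cohort) : forall A, measurable A -> (forall w, A w -> G w \in L) ->
  (forall c, measurable_fun (A `&` G @^-1` [set c]) f) ->
  (forall c, measurable_fun (A `&` G @^-1` [set c]) h) ->
  (forall c, \int[mu]_(x in A `&` G @^-1` [set c]) f x = \int[mu]_(x in A `&` G @^-1` [set c]) h x) ->
  \int[mu]_(x in A) f x = \int[mu]_(x in A) h x.
Proof.
elim: L => [|c L IH] A mA cov mf mh eqfh.
  have -> : A = set0 by apply/seteqP; split => w //= /cov.
  by rewrite !integral_set0.
have mGc := HGmeas c.
have mA1 : measurable (A `&` G @^-1` [set c]) by exact: measurableI.
have mA2 : measurable (A `&` ~` (G @^-1` [set c])) by apply: measurableI=>//; exact: measurableC.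
have eA : A = (A `&` G @^-1` [set c]) `|` (A `&` ~` (G @^-1` [set c])).
  by rewrite -setIUr setUCr setIT.
have dA : [disjoint A `&` G @^-1` [set c] & A `&` ~` (G @^-1` [set c])].
  by apply/disj_setPS => w [[_ ?] [_ ?]].
have cov2 : forall w, (A `&` ~` (G @^-1` [set c])) w -> G w \in L.
  move=> w [Aw /= nc]; move: (cov w Aw); rewrite inE => /orP[/eqP//|//].
have sub2 : forall c', (A `&` ~` (G @^-1` [set c])) `&` G @^-1` [set c'] `<=` A `&` G @^-1` [set c'].
  by move=> c' w [[Aw _] ?].
have mf' : measurable_fun A f.
  by apply: (@pieces_meas _ _ G HGmeas unit _ _ _ (c::L)).
have mh' : measurable_fun A h.
  by apply: (@pieces_meas _ _ G HGmeas unit _ _ _ (c::L)).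
rewrite eA integral_setU //; last by rewrite -eA.
rewrite [RHS]integral_setU //; last by rewrite -eA.
congr (_ + _); first exact: eqfh.
apply: (IH _ mA2 cov2).
- move=> c'; apply: (measurable_funS _ (sub2 c') (mf c')); first exact: measurableI.

- move=> c'; apply: (measurable_funS _ (sub2 c') (mh c')); first exact: measurableI.

- move=> c'; have [->|nc] := eqVneq c' c.
    have -> : (A `&` ~` (G @^-1` [set c])) `&` G @^-1` [set c] = set0.
      by apply/seteqP; split => w // [[_ ?] ?].
    by rewrite !integral_set0.
  have -> : (A `&` ~` (G @^-1` [set c])) `&` G @^-1` [set c'] = A `&` G @^-1` [set c'].
    apply/seteqP; split => w; first by move=> [[? _] ?].
    by move=> [Aw /= Gw]; split => //; split => //= Gc; move/eqP: nc; rewrite -Gw Gc.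
  exact: eqfh.
Qed.

Local Close Scope ereal_scope.

Lemma condE_ext d (Omega : measurableType d) (R : realType) (P : probability Omega R)
  (A : set Omega) (f h : Omega -> R) : {in A, f =1 h} -> condE P A f = condE P A h.
Proof. by move=> fh; rewrite /condE (eq_Rintegral _ fh). Qed.

Lemma condE_Rint d (Omega : measurableType d) (R : realType) (P : probability Omega R)
  (A : set Omega) (f h : Omega -> R) : measurable A -> (0 < P A)%E ->
  condE P A f = condE P A h -> Rintegral P A f = Rintegral P A h.
Proof.
move=> mA PA; rewrite /condE => E.
have p0 : 0 < fine (P A).
  apply: fine_gt0; rewrite PA /=.
  by apply: (le_lt_trans (probability_le1 P mA)); rewrite ltry.
move/(congr1 (fun z => z * fine (P A))): E.
by rewrite !divfK // gt_eqF.
Qed.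

Lemma Rint_EFin d (Omega : measurableType d) (R : realType) (P : probability Omega R)
  (A : set Omega) (f : Omega -> R) : measurable A -> P.-integrable A (EFin \o f) ->
  ((Rintegral P A f)%:E = \int[P]_(x in A) (f x)%:E)%E.
Proof. move=> mA fi; rewrite /Rintegral fineK //; exact: integrable_fin_num. Qed.

Lemma int_on d (Omega : measurableType d) (R : realType) (P : probability Omega R)
  (Sub : finType) (T : nat) (Y : nat -> cohort -> Sub -> Omega -> R)
  (Hint : forall t : nat, (t <= T)%N -> forall c : cohort, valid_cohort T c ->
     forall sg : Sub, P.-integrable setT (EFin \o Y t c sg))
  (B : set Omega) (mB : measurable B) (F : Omega -> R) t1 t2 c1 c2 sg :
  (t1 <= T)%N -> (t2 <= T)%N -> valid_cohort T c1 -> valid_cohort T c2 ->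
  {in B, F =1 fun w => Y t1 c1 sg w - Y t2 c2 sg w} ->
  P.-integrable B (EFin \o F).
Proof.
move=> h1 h2 v1 v2 eF.
have i1 : P.-integrable B (EFin \o Y t1 c1 sg) by apply: integrableS (Hint _ h1 _ v1 sg).
have i2 : P.-integrable B (EFin \o Y t2 c2 sg) by apply: integrableS (Hint _ h2 _ v2 sg).
apply: (eq_integrable mB _ _ _ (integrableB mB i1 i2)) => w wB.
by rewrite /= eF //.
Qed.

Lemma condE_ext' d (Omega : measurableType d) (R : realType) (P : probability Omega R)
  (A : set Omega) (f h : Omega -> R) : (forall w, A w -> f w = h w) -> condE P A f = condE P A h.
Proof. by move=> fh; apply: condE_ext => w; rewrite in_setE; exact: fh. Qed.

Theorem proposition2 (d : measure_display) (Omega : measurableType d) (R : realType)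
  (P : probability Omega R) (Sub : finType) (T : nat)
  (G : Omega -> cohort) (S : Omega -> Sub) (Y : nat -> cohort -> Sub -> Omega -> R)
  (HGval : forall w, valid_cohort T (G w))
  (HGmeas : forall c : cohort, measurable (G @^-1` [set c]))
  (HSmeas : forall sg : Sub, measurable (S @^-1` [set sg]))
  (Hint : forall t : nat, (t <= T)%N -> forall c : cohort, valid_cohort T c ->
     forall sg : Sub, P.-integrable setT (EFin \o Y t c sg))
  (s s' : Sub) (g t : nat)
  (Hss : s != s')
  (Hg : (1 <= g <= T)%N) (Ht : (g <= t <= T)%N)
  (Hps : (0 < P (evGS G S (Some g) s))%E) (Hps' : (0 < P (evGS G S (Some g) s'))%E)
  (Hnss : condE P (evGS G S (Some g) s) (fun w => Y t (Some g) s' w - Y t None s' w)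
        = condE P (evGS G S (Some g) s') (fun w => Y t (Some g) s' w - Y t None s' w)) :
  CDATT P G S Y s s' g t = DATT P G S Y s s' g t
  /\ (let C := [set w | cohort_gt (G w) t] in
      (0 < P (evCS C S s))%E -> (0 < P (evCS C S s'))%E ->
      no_anticipation P T G S Y -> parallel_trends P G S Y C s s' g t ->
      CDATT P G S Y s s' g t = DDD P G S Y C s s' g t)
  /\ (let C := [set w | G w = None] in
      (0 < P (evCS C S s))%E -> (0 < P (evCS C S s'))%E ->
      no_anticipation P T G S Y -> parallel_trends P G S Y C s s' g t ->
      CDATT P G S Y s s' g t = DDD P G S Y C s s' g t).
Proof.
have mGS : forall c sg, measurable (evGS G S c sg).
  by move=> c sg; exact: (measurableI _ _ (HGmeas c) (HSmeas sg)).
have eq1 : CDATT P G S Y s s' g t = DATT P G S Y s s' g t.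
  have e1 : condE P (evGS G S (Some g) s) (fun w => Y t (Some g) (S w) w - Y t None (S w) w)
      = condE P (evGS G S (Some g) s) (fun w => Y t (Some g) s w - Y t None s w).
    by apply: condE_ext' => w [_ ->].
  have e2 : condE P (evGS G S (Some g) s') (fun w => Y t (Some g) (S w) w - Y t None (S w) w)
      = condE P (evGS G S (Some g) s') (fun w => Y t (Some g) s' w - Y t None s' w).
    by apply: condE_ext' => w [_ ->].
  by rewrite /CDATT /DATT e1 e2 Hnss.
have iY : forall B tau c sg, measurable B -> (tau <= T)%N -> valid_cohort T c ->
    P.-integrable B (EFin \o Y tau c sg).
  by move=> B tau c sg mB tT vc; apply: integrableS (Hint _ tT _ vc sg).
have tT : (t <= T)%N by case/andP: Ht.
have g1T : (g.-1 <= T)%N by case/andP: Hg => _ /(leq_trans (leq_pred _)).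
have vg : valid_cohort T (Some g) by [].
have vN : valid_cohort T None by [].
have ltg : (g.-1 < g)%N by case/andP: Hg => g1 _; rewrite prednK // ltnS.
have Egs : forall sg, (0 < P (evGS G S (Some g) sg))%E -> no_anticipation P T G S Y ->
  condE P (evGS G S (Some g) sg) (fun w => Yobs G S Y t w - Yobs G S Y g.-1 w)
  = condE P (evGS G S (Some g) sg) (fun w => Y t (Some g) (S w) w - Y t None (S w) w)
  + condE P (evGS G S (Some g) sg) (fun w => Y t None (S w) w - Y g.-1 None (S w) w).
  move=> sg Psg NA.
  have NAs : Rintegral P (evGS G S (Some g) sg) (Y g.-1 (Some g) sg)
           = Rintegral P (evGS G S (Some g) sg) (Y g.-1 None sg).
    apply: condE_Rint => //.
    have := NA g Hg g.-1 ltg sg Psg.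
    have -> : condE P (evGS G S (Some g) sg) (fun w => Y g.-1 (Some g) (S w) w)
      = condE P (evGS G S (Some g) sg) (Y g.-1 (Some g) sg) by apply: condE_ext' => w [_ ->].
    have -> : condE P (evGS G S (Some g) sg) (fun w => Y g.-1 None (S w) w)
      = condE P (evGS G S (Some g) sg) (Y g.-1 None sg) by apply: condE_ext' => w [_ ->].
    by [].
  have -> : condE P (evGS G S (Some g) sg) (fun w => Yobs G S Y t w - Yobs G S Y g.-1 w)
    = condE P (evGS G S (Some g) sg) (fun w => Y t (Some g) sg w - Y g.-1 (Some g) sg w).
    by apply: condE_ext' => w [Gw Sw]; rewrite /Yobs Gw Sw.
  have -> : condE P (evGS G S (Some g) sg) (fun w => Y t (Some g) (S w) w - Y t None (S w) w)
    = condE P (evGS G S (Some g) sg) (fun w => Y t (Some g) sg w - Y t None sg w).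
    by apply: condE_ext' => w [Gw ->].
  have -> : condE P (evGS G S (Some g) sg) (fun w => Y t None (S w) w - Y g.-1 None (S w) w)
    = condE P (evGS G S (Some g) sg) (fun w => Y t None sg w - Y g.-1 None sg w).
    by apply: condE_ext' => w [Gw ->].
  rewrite /condE !RintegralB //; try by apply: iY.
  by rewrite NAs -mulrDl addrA subrK.
split; first exact: eq1.
have finish : forall C : set Omega,
  (no_anticipation P T G S Y -> forall sg, condE P (evCS C S sg) (fun w => Yobs G S Y t w - Yobs G S Y g.-1 w)
     = condE P (evCS C S sg) (fun w => Y t None (S w) w - Y g.-1 None (S w) w)) ->
  (0 < P (evCS C S s))%E -> (0 < P (evCS C S s'))%E ->
  no_anticipation P T G S Y -> parallel_trends P G S Y C s s' g t ->
  CDATT P G S Y s s' g t = DDD P G S Y C s s' g t.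
  move=> C EC PCs PCs' NA PT.
  rewrite eq1 /DATT /DDD /= !(EC NA) Egs // Egs //.
  move: PT; rewrite /parallel_trends /= => PT.
  rewrite -PT; ring.
split.
  rewrite /=; apply: finish => NA sg.
  set C := [set w | cohort_gt (G w) t].
  have mA : measurable (evCS C S sg).
    exact: (measurableI _ _ (@preG_meas _ _ G HGmeas [set c | cohort_gt c t]) (HSmeas sg)).
  rewrite /condE; congr (_ / _); rewrite /Rintegral; congr fine.
  have key : forall c,
    measurable_fun (evCS C S sg `&` G @^-1` [set c]) (fun x => (Yobs G S Y t x - Yobs G S Y g.-1 x)%:E)
    /\ measurable_fun (evCS C S sg `&` G @^-1` [set c]) (fun x => (Y t None (S x) x - Y g.-1 None (S x) x)%:E)
    /\ (\int[P]_(x in evCS C S sg `&` G @^-1` [set c]) (Yobs G S Y t x - Yobs G S Y g.-1 x)%:E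
       = \int[P]_(x in evCS C S sg `&` G @^-1` [set c]) (Y t None (S x) x - Y g.-1 None (S x) x)%:E)%E.
    case => [k|].
    - have [hk|hk] := pselect ((k <= T)%N /\ (t < k)%N); last first.
        have -> : evCS C S sg `&` G @^-1` [set Some k] = set0.
          apply/seteqP; split => // w [[Cw Sw] Gw]; exfalso.
          move: (HGval w) Cw; rewrite /C /= Gw /= => /andP[_ kT] tk; exact: hk (conj kT tk).
        split; first exact: measurable_fun_set0.
        split; first exact: measurable_fun_set0.
        by rewrite !integral_set0.
      case: hk => kT tk.
      have eqP1 : evCS C S sg `&` G @^-1` [set Some k] = evGS G S (Some k) sg.
        apply/seteqP; split => w /=; first by move=> [[Cw Sw] Gw].
        by move=> [Gw Sw]; split => //; split => //; rewrite /C /= Gw.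
      rewrite eqP1.
      have eD : {in evGS G S (Some k) sg, (fun w => Yobs G S Y t w - Yobs G S Y g.-1 w)
          =1 fun w => Y t (Some k) sg w - Y g.-1 (Some k) sg w}.
        by move=> w; rewrite in_setE => -[Gw Sw]; rewrite /Yobs Gw Sw.
      have eH : {in evGS G S (Some k) sg, (fun w => Y t None (S w) w - Y g.-1 None (S w) w)
          =1 fun w => Y t None sg w - Y g.-1 None sg w}.
        by move=> w; rewrite in_setE => -[Gw Sw]; rewrite Sw.
      have gt : (g <= t)%N by case/andP: Ht.
      have g1 : (1 <= g)%N by case/andP: Hg.
      have vk : valid_cohort T (Some k).
        by rewrite /= kT andbT; apply: leq_trans (ltnW tk); exact: leq_trans gt.
      have iD := @int_on _ _ _ P _ T Y Hint _ (mGS (Some k) sg) _ t g.-1 (Some k) (Some k) sg tT g1T vk vk eD.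
      have iH := @int_on _ _ _ P _ T Y Hint _ (mGS (Some k) sg) _ t g.-1 None None sg tT g1T vN vN eH.
      split; first exact: (measurable_int _ iD).
      split; first exact: (measurable_int _ iH).
      have [P0|Pn0] := eqVneq (P (evGS G S (Some k) sg)) 0%E.
        rewrite !null_set_integral //; [exact: (measurable_int _ iH)|exact: (measurable_int _ iD)].
      have Ppos : (0 < P (evGS G S (Some k) sg))%E by rewrite lt0e Pn0 measure_ge0.
      have NA1 : forall tau, (tau < k)%N -> Rintegral P (evGS G S (Some k) sg) (Y tau (Some k) sg)
           = Rintegral P (evGS G S (Some k) sg) (Y tau None sg).
        move=> tau tauk; apply: condE_Rint => //.
        have := NA k vk tau tauk sg Ppos.
        have -> : condE P (evGS G S (Some k) sg) (fun w => Y tau (Some k) (S w) w)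
          = condE P (evGS G S (Some k) sg) (Y tau (Some k) sg) by apply: condE_ext' => w [_ ->].
        have -> : condE P (evGS G S (Some k) sg) (fun w => Y tau None (S w) w)
          = condE P (evGS G S (Some k) sg) (Y tau None sg) by apply: condE_ext' => w [_ ->].
        by [].
      have g1k : (g.-1 < k)%N by apply: leq_trans ltg (leq_trans gt (ltnW tk)).
      rewrite -(@Rint_EFin _ _ _ P _ _ (mGS _ _) iD) -(@Rint_EFin _ _ _ P _ _ (mGS _ _) iH).
      congr EFin.
      rewrite (eq_Rintegral _ eD) (eq_Rintegral _ eH).
      rewrite !RintegralB //; try by apply: iY.
      by rewrite NA1 // NA1.
    - have eN : {in evCS C S sg `&` G @^-1` [set None], (fun w => Yobs G S Y t w - Yobs G S Y g.-1 w)
          =1 fun w => Y t None sg w - Y g.-1 None sg w}.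
        by move=> w; rewrite in_setE => -[[_ Sw] Gw]; rewrite /Yobs /= Gw Sw.
      have eH : {in evCS C S sg `&` G @^-1` [set None], (fun w => Y t None (S w) w - Y g.-1 None (S w) w)
          =1 fun w => Y t None sg w - Y g.-1 None sg w}.
        by move=> w; rewrite in_setE => -[[_ Sw] Gw]; rewrite Sw.
      have mP : measurable (evCS C S sg `&` G @^-1` [set None]) by exact: measurableI.
      have iD := @int_on _ _ _ P _ T Y Hint _ mP _ t g.-1 None None sg tT g1T vN vN eN.
      have iH := @int_on _ _ _ P _ T Y Hint _ mP _ t g.-1 None None sg tT g1T vN vN eH.
      split; first exact: (measurable_int _ iD).
      split; first exact: (measurable_int _ iH).
      apply: eq_integral => w; rewrite in_setE => -[_ Gw].
      by rewrite /Yobs /= Gw.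
  apply: (@pieces_int _ _ _ P G HGmeas (fun x => (Yobs G S Y t x - Yobs G S Y g.-1 x)%:E)
     (fun x => (Y t None (S x) x - Y g.-1 None (S x) x)%:E) (None :: map Some (iota 1 T)) _ mA).
  - move=> w _; move: (HGval w); case: (G w) => [k|] /=; last by rewrite inE.
    move=> /andP[k1 kT]; rewrite in_cons (mem_map (@Some_inj _)) mem_iota k1 add1n ltnS kT.
    by rewrite orbT.
  - by move=> c; case: (key c).
  - by move=> c; case: (key c) => _ [].
  - by move=> c; case: (key c) => _ [].
rewrite /=; apply: finish => _ sg; apply: condE_ext' => w [/= Gw _]; by rewrite /Yobs Gw.
Qed.
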